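(* Let $f\colon \mathcal{X}\times\mathcal{Y}\to\{0,1\}$ be a function and let $\mu$ be a distribution on $\mathcal{X}\times\mathcal{Y}$ with $\mathrm{supp}(\mu)\subseteq f^{-1}(1)$. Then \[ \mathrm{IC}^{\mathrm{external},1}_{\mu}[f,0]\ \le\ \lim_{q\to\infty}\frac{1}{q}\,\mathrm{CC}^{1^q}_{\mu^q}[f^q,0]. \]
   Context: All logarithms are base 2; all random variables have finite support. For a function $g$ on $\mathcal{X}\times\mathcal{Y}$ and an output value $a$, an $a$-proof for $g$ consists of a random message $M=M(X,Y)$ (a distribution over finite binary strings $m$ for each input $(x,y)$) together with acceptance functions $\mathrm{Acc}_A(x,m)\in\{0,1\}$ and $\mathrm{Acc}_B(y,m)\in\{0,1\}$ such that for all $(x,y)$: (i) if $g(x,y)=a$ then for every $m$ with $\Pr[M=m\mid (x,y)]>0$ we have $\mathrm{Acc}_A(x,m)=1$ and $\mathrm{Acc}_B(y,m)=1$; (ii) if $g(x,y)\ne a$ then for every $m$, $\mathrm{Acc}_A(x,m)=0$ or $\mathrm{Acc}_B(y,m)=0$. For $q\in\mathbb{N}$, $f^q$ is the function on $(\mathcal{X}^q\times\mathcal{Y}^q)$ mapping $((x_1,\dots,x_q),(y_1,\dots,y_q))$ to $(f(x_1,y_1),\dots,f(x_q,y_q))$, and $\mu^q$ is the product distribution (the $q$ pairs $(x_i,y_i)$ are i.i.d. from $\mu$). Define $\mathrm{CC}^{1^q}_{\mu^q}[f^q,0]=\inf\{\mathbb{E}_{(x,y)\sim\mu^q,\,m\sim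 M|_{(x,y)}}|m| : M \text{ a } 1^q\text{-proof for } f^q\}$, where $1^q$ is the all-ones output and $|m|$ is the length of $m$, and $\mathrm{IC}^{\mathrm{external},1}_{\mu}[f,0]=\inf\{I(XY;M): M \text{ a } 1\text{-proof for } f\}$, with $(X,Y)\sim\mu$ and $M\sim M|_{(X,Y)}$, and $I$ denoting mutual information. *)

(* Defs.v *)
From HB Require Import structures.
From mathcomp Require Import all_boot all_order all_algebra.
From mathcomp Require Import all_classical all_reals all_analysis.
Set Implicit Arguments. Unset Strict Implicit. Unset Printing Implicit Defensive.
Import Order.TTheory GRing.Theory Num.Theory.
Local Open Scope ring_scope.

Definition log2 {R : realType} (x : R) : R := ln x / ln 2.

Section Proofs.
Variables (R : realType) (X Y : finType) (O : eqType).

(* A random message M = M(x,y): for each input (x,y) a distribution over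
   finite binary strings, with finite support contained in the duplicate-free
   list [ms]; w x y m = Pr[M = m | (x,y)] for m \in ms (and 0 off ms). *)
Definition is_msg_dist (ms : seq (seq bool)) (w : X -> Y -> seq bool -> R) : Prop :=
  [/\ uniq ms,
      (forall x y m, 0 <= w x y m),
      (forall x y m, m \notin ms -> w x y m = 0) &
      (forall x y, \sum_(m <- ms) w x y m = 1)].

Definition is_a_proof (g : X -> Y -> O) (a : O) (ms : seq (seq bool))
    (w : X -> Y -> seq bool -> R)
    (accA : X -> seq bool -> bool) (accB : Y -> seq bool -> bool) : Prop :=
  [/\ is_msg_dist ms w,
      (forall x y, g x y = a -> forall m, 0 < w x y m -> accA x m /\ accB y m) &
      (forall x y, g x y <> a -> forall m, accA x m = false \/ accB y m = false)].

Definition exp_len (mu : X -> Y -> R) (ms : seq (seq bool))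
    (w : X -> Y -> seq bool -> R) : R :=
  \sum_(x : X) \sum_(y : Y) \sum_(m <- ms) mu x y * w x y m * (size m)%:R.

Definition msg_marg (mu : X -> Y -> R) (w : X -> Y -> seq bool -> R) (m : seq bool) : R :=
  \sum_(x : X) \sum_(y : Y) mu x y * w x y m.

Definition ext_info (mu : X -> Y -> R) (ms : seq (seq bool))
    (w : X -> Y -> seq bool -> R) : R :=
  \sum_(x : X) \sum_(y : Y) \sum_(m <- ms)
     (let p := mu x y * w x y m in
      if 0 < p then p * log2 (p / (mu x y * msg_marg mu w m)) else 0).

Local Open Scope ereal_scope.

Definition CC_proof (g : X -> Y -> O) (a : O) (mu : X -> Y -> R) : \bar R :=
  ereal_inf [set r : \bar R | exists ms w accA accB,
     is_a_proof g a ms w accA accB /\ r = (exp_len mu ms w)%:E].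

Definition IC_ext_proof (g : X -> Y -> O) (a : O) (mu : X -> Y -> R) : \bar R :=
  ereal_inf [set r : \bar R | exists ms w accA accB,
     is_a_proof g a ms w accA accB /\ r = (ext_info mu ms w)%:E].

End Proofs.

Definition fpow (X Y : finType) (f : X -> Y -> bool) (q : nat)
    (xs : {ffun 'I_q -> X}) (ys : {ffun 'I_q -> Y}) : {ffun 'I_q -> bool} :=
  [ffun i => f (xs i) (ys i)].

Definition ones (q : nat) : {ffun 'I_q -> bool} := [ffun => true].

Definition mupow {R : realType} (X Y : finType) (mu : X -> Y -> R) (q : nat)
    (xs : {ffun 'I_q -> X}) (ys : {ffun 'I_q -> Y}) : R :=
  \prod_(i < q) mu (xs i) (ys i).

Arguments fpow {X Y} f q xs ys.
Arguments mupow {R X Y} mu q xs ys.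

(* Main.v *)
Require Import Defs.
From HB Require Import structures.
From mathcomp Require Import all_boot all_order all_algebra.
From mathcomp Require Import all_classical all_reals all_analysis.
From mathcomp Require Import ring lra.
Import Order.TTheory GRing.Theory Num.Theory.
Local Open Scope ring_scope.

Module Aux.
Set Implicit Arguments. Unset Strict Implicit. Unset Printing Implicit Defensive.

Section Analytic.
Variable R : realType.
Implicit Types x y p q : R.

Lemma ln2_gt0 : 0 < ln (2 : R).
Proof. by apply: ln_gt0; rewrite ltr1n. Qed.

Lemma ln_le_sub1 x : 0 < x -> ln x <= x - 1.
Proof.
move=> x0; have := expR_ge1Dx (ln x); rewrite lnK ?qualifE //.
by move=> h; lra.
Qed.

Lemma log2M x y : 0 < x -> 0 < y -> log2 (x * y) = log2 x + log2 y.
Proof.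
by move=> x0 y0; rewrite /log2 lnM ?qualifE // mulrDl.
Qed.

Lemma log2V x : 0 < x -> log2 (x^-1) = - log2 x.
Proof. by move=> x0; rewrite /log2 lnV ?qualifE // mulNr. Qed.

Lemma log2_le0 x : x <= 1 -> log2 x <= 0.
Proof.
move=> x1; rewrite /log2 pmulr_lle0 ?invr_gt0 ?ln2_gt0 //; exact: ln_le0.
Qed.

Lemma gibbs_term p q : 0 < p -> 0 < q -> (p - q) / ln 2 <= p * log2 (p / q).
Proof.
move=> p0 q0; rewrite /log2 mulrA ler_pM2r ?invr_gt0 ?ln2_gt0 //.
have h := ln_le_sub1 (divr_gt0 q0 p0).
have -> : p / q = (q / p)^-1 by rewrite invf_div.
rewrite lnV ?qualifE ?divr_gt0 //.
have : p * ln (q / p) <= p * (q / p - 1) by rewrite ler_pM2l.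
rewrite mulrBr mulr1 mulrCA divff ?gt_eqF // mulr1 => h2.
rewrite mulrN; lra.
exact: divr_gt0.
Qed.

End Analytic.


Section Info.
Variables (R : realType) (X Y : finType).
Variables (mu : X -> Y -> R) (ms : seq (seq bool)) (w : X -> Y -> seq bool -> R).
Hypothesis mu_ge0 : forall x y, 0 <= mu x y.
Hypothesis mu_sum1 : \sum_(x : X) \sum_(y : Y) mu x y = 1.
Hypothesis hw : is_msg_dist ms w.

Lemma w_ge0 x y m : 0 <= w x y m.
Proof. by case: hw. Qed.

Lemma w_sum1 x y : \sum_(m <- ms) w x y m = 1.
Proof. by case: hw. Qed.

Lemma le_sum1 (I : finType) (F : I -> R) i : (forall j, 0 <= F j) -> F i <= \sum_j F j.
Proof. by move=> h; rewrite (bigD1 i) //= lerDl sumr_ge0. Qed.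
Arguments le_sum1 {I F} i.

Lemma w_le1 x y m : w x y m <= 1.
Proof.
case: hw => u _ h0 _; case: (boolP (m \in ms)) => mi; last by rewrite h0.
rewrite -(w_sum1 x y) (bigD1_seq m) //= lerDl sumr_ge0 // => *; exact: w_ge0.
Qed.

Lemma p_le_marg x y m : mu x y * w x y m <= msg_marg mu w m.
Proof.
rewrite /msg_marg (le_trans _ (le_sum1 x _)) //.
  by apply: le_sum1 => j; rewrite mulr_ge0 // w_ge0.
by move=> j; rewrite sumr_ge0 // => k _; rewrite mulr_ge0 // w_ge0.
Qed.

Lemma marg_ge0 m : 0 <= msg_marg mu w m.
Proof. by rewrite sumr_ge0 // => x _; rewrite sumr_ge0 // => y _; rewrite mulr_ge0 // w_ge0. Qed.

Lemma ext_info_E : ext_info mu ms w = \sum_x \sum_y \sum_(m <- ms)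
   (mu x y * w x y m) * log2 (mu x y * w x y m / (mu x y * msg_marg mu w m)).
Proof.
apply: eq_bigr => x _; apply: eq_bigr => y _; apply: eq_bigr => m _ /=.
case: ifP => // hp.
have : 0 <= mu x y * w x y m by rewrite mulr_ge0 // w_ge0.
by rewrite le_eqVlt hp orbF => /eqP <-; rewrite mul0r.
Qed.

Lemma sum_p : \sum_x \sum_y \sum_(m <- ms) mu x y * w x y m = 1.
Proof.
rewrite -mu_sum1; apply: eq_bigr => x _; apply: eq_bigr => y _.
by rewrite -mulr_sumr w_sum1 mulr1.
Qed.

Lemma sum_marg : \sum_(m <- ms) msg_marg mu w m = 1.
Proof.
rewrite /msg_marg exchange_big /=; rewrite -sum_p; apply: eq_bigr => x _.
by rewrite exchange_big.
Qed.

Lemma sum_pd : \sum_x \sum_y \sum_(m <- ms) mu x y * msg_marg mu w m = 1.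
Proof.
rewrite -mu_sum1; apply: eq_bigr => x _; apply: eq_bigr => y _.
by rewrite -mulr_sumr sum_marg mulr1.
Qed.

Lemma ext_info_ge0 : 0 <= ext_info mu ms w.
Proof.
rewrite ext_info_E.
apply: (le_trans _ (ler_sum _ (fun x _ => ler_sum _ (fun y _ => ler_sum _
   (fun m _ => (_ : (mu x y * w x y m - mu x y * msg_marg mu w m) / ln 2 <= _)))))).
  have -> : \sum_x \sum_y \sum_(m <- ms)
     (mu x y * w x y m - mu x y * msg_marg mu w m) / ln 2 =
   (\sum_x \sum_y \sum_(m <- ms) mu x y * w x y m -
    \sum_x \sum_y \sum_(m <- ms) mu x y * msg_marg mu w m) / ln 2.
    rewrite -sumrB mulr_suml; apply: eq_bigr => x _; rewrite -sumrB mulr_suml.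
    by apply: eq_bigr => y _; rewrite -sumrB mulr_suml.
  by rewrite sum_p sum_pd subrr mul0r.
move=> x _ y _ m _.
have hp : 0 <= mu x y * w x y m by rewrite mulr_ge0 // w_ge0.
have hd : 0 <= mu x y * msg_marg mu w m by rewrite mulr_ge0 // marg_ge0.
move: hp; rewrite le_eqVlt => /orP [/eqP <-|hp].
  by rewrite mul0r sub0r mulNr oppr_le0 divr_ge0 // ltW // ln2_gt0.
apply: gibbs_term => //.
have mu0 : 0 < mu x y.
  by move: hp; rewrite lt_def mulf_eq0 negb_or => /andP [/andP [+ _] _]; rewrite lt_def => ->; rewrite mu_ge0.
apply: mulr_gt0 => //; exact: lt_le_trans hp (p_le_marg x y m).
Qed.

End Info.
Arguments w_ge0 {R X Y ms w}.
Arguments w_sum1 {R X Y ms w}.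
Arguments w_le1 {R X Y ms w}.
Arguments p_le_marg {R X Y mu ms w}.
Arguments marg_ge0 {R X Y mu ms w}.
Arguments ext_info_E {R X Y mu ms w}.
Arguments sum_p {R X Y mu ms w}.
Arguments sum_marg {R X Y mu ms w}.
Arguments sum_pd {R X Y mu ms w}.
Arguments ext_info_ge0 {R X Y mu ms w}.


Section Kraft.
Variable R : realType.
Variables (a S : R).
Hypotheses (a0 : 0 <= a) (S0 : 0 < S) (hS : 1 + 2 * a * S <= S).

Lemma kraftN N (ms : seq (seq bool)) : uniq ms -> all (fun m => size m < N)%N ms ->
  \sum_(m <- ms) a ^+ size m <= S.
Proof.
elim: N ms => [|N IH] ms u.
  by case: ms u => [|m ms] //= _ _; rewrite big_nil ltW.
move=> hall.
have part b : \sum_(m <- ms | ohead m == Some b) a ^+ size m <= a * S.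
  rewrite -big_filter.
  set L := [seq behead m | m <- ms & ohead m == Some b].
  have eL : [seq m <- ms | ohead m == Some b] = map (cons b) L.
    rewrite -map_comp; symmetry; apply: map_id_in => m.
    by rewrite mem_filter => /andP [h _]; case: m h => //= b' m' /eqP [->].
  rewrite eL big_map /=.
  under eq_bigr do rewrite exprS.
  rewrite -mulr_sumr ler_wpM2l // IH //.
    by rewrite -(map_inj_uniq (fun x y => @congr1 _ _ behead (b :: x) (b :: y))) -eL filter_uniq.
  apply/allP => m' hm'.
  have : b :: m' \in [seq m <- ms | ohead m == Some b] by rewrite eL map_f.
  by rewrite mem_filter => /andP [_ /(allP hall)].
rewrite (bigID (fun m => m == [::])) /=.
have -> : \sum_(m <- ms | ~~ (m == [::])) a ^+ size m =
   \sum_(m <- ms | ohead m == Some true) a ^+ size m +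
   \sum_(m <- ms | ohead m == Some false) a ^+ size m.
  rewrite (bigID (fun m => ohead m == Some true)) /=; congr (_ + _).
    by apply: eq_bigl => m; case: m => // b m /=; case: b.
  by apply: eq_bigl => m; case: m => // b m /=; case: b.
have h1 : \sum_(m <- ms | m == [::]) a ^+ size m <= 1.
  rewrite -big_filter; case: (boolP ([::] \in ms)) => hin.
    by rewrite filter_pred1_uniq // big_seq1 expr0.
  rewrite (eq_in_filter (a2 := pred0)); first by rewrite filter_pred0 big_nil ler01.
  by move=> m hm /=; apply/eqP => e; rewrite -e hm in hin.
apply: le_trans hS.
by have := part true; have := part false; lra.
Qed.

Lemma kraft (ms : seq (seq bool)) : uniq ms -> \sum_(m <- ms) a ^+ size m <= S.
Proof.
move=> u; apply: (@kraftN (\max_(m <- ms) size m).+1) => //.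
by apply/allP => m hm; rewrite ltnS (@leq_bigmax_seq _ ms xpredT size m hm erefl).
Qed.

End Kraft.


Lemma gibbs_term2 (R : realType) (m q : R) : 0 < m -> 0 < q ->
  m * - log2 m <= m * - log2 q + (q - m) / ln 2.
Proof.
move=> m0 q0; have := gibbs_term m0 q0.
rewrite log2M ?invr_gt0 // log2V //.
have -> : (q - m) / ln 2 = - ((m - q) / ln 2) by rewrite -mulNr opprB.
set D := (m - q) / ln 2; move=> h.
rewrite !mulrN mulrDr mulrN in h *; lra.
Qed.

Section Len.
Variables (R : realType) (X Y : finType).
Variables (mu : X -> Y -> R) (ms : seq (seq bool)) (w : X -> Y -> seq bool -> R).
Hypothesis mu_ge0 : forall x y, 0 <= mu x y.
Hypothesis mu_sum1 : \sum_(x : X) \sum_(y : Y) mu x y = 1.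
Hypothesis hw : is_msg_dist ms w.
Variable t : R.
Hypothesis t1 : 1 < t.

Let c := 1 - t^-1.
Let Q (m : seq bool) := c * ((2 * t)^-1) ^+ size m.

Lemma c_gt0 : 0 < c.
Proof. by rewrite /c subr_gt0 invf_lt1 // (lt_trans ltr01). Qed.

Lemma t_gt0 : 0 < t. Proof. exact: lt_trans ltr01 t1. Qed.

Lemma Q_gt0 m : 0 < Q m.
Proof. by rewrite /Q mulr_gt0 ?c_gt0 // exprn_gt0 // invr_gt0 mulr_gt0 // t_gt0. Qed.

Lemma sumQ : \sum_(m <- ms) Q m <= 1.
Proof.
have hu : uniq ms by case: hw.
have c0 := c_gt0; have t0 := t_gt0.
rewrite /Q -mulr_sumr.
have hk := @kraft R ((2 * t)^-1) c^-1.
rewrite (le_trans (ler_wpM2l (ltW c0) (hk _ _ _ ms hu))) ?divff ?gt_eqF //.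
- by rewrite ltW // invr_gt0 mulr_gt0.
- by rewrite invr_gt0.
rewrite le_eqVlt; apply/orP; left; apply/eqP; rewrite /c.
field. rewrite subr_eq0 !gt_eqF //. 
Qed.

Let K := log2 (2 * t).

Lemma logQ m : - log2 (Q m) = - log2 c + (size m)%:R * K.
Proof.
have t0 := t_gt0.
rewrite /Q log2M ?c_gt0 ?exprn_gt0 ?invr_gt0 ?mulr_gt0 //.
rewrite /log2 lnXn ?invr_gt0 ?mulr_gt0 // lnV ?qualifE /= ?mulr_gt0 //.
rewrite /K /log2 mulrnAl -mulr_natl; ring.
Qed.

Lemma exp_len_E : exp_len mu ms w = \sum_(m <- ms) msg_marg mu w m * (size m)%:R.
Proof.
rewrite /exp_len /msg_marg.
transitivity (\sum_(m <- ms) \sum_x \sum_y mu x y * w x y m * (size m)%:R).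
  rewrite [in RHS]exchange_big /=; apply: eq_bigr => x _; by rewrite [in RHS]exchange_big.
apply: eq_bigr => m _; rewrite mulr_suml; apply: eq_bigr => x _; by rewrite mulr_suml.
Qed.

Lemma len_bound : ext_info mu ms w <= K * exp_len mu ms w - log2 c.
Proof.
have step1 : ext_info mu ms w <= \sum_x \sum_y \sum_(m <- ms)
    (mu x y * w x y m) * (- log2 (msg_marg mu w m)).
  rewrite (ext_info_E mu_ge0 hw); apply: ler_sum => x _; apply: ler_sum => y _; apply: ler_sum => m _.
  have hp : 0 <= mu x y * w x y m by rewrite mulr_ge0 // (w_ge0 hw).
  move: hp; rewrite le_eqVlt => /orP [/eqP <-|hp]; first by rewrite !mul0r.
  have mu0 : 0 < mu x y.
    by move: hp; rewrite lt_def mulf_eq0 negb_or => /andP [/andP [+ _] _]; rewrite lt_def => ->; rewrite mu_ge0.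
  have w0 : 0 < w x y m.
    by move: hp; rewrite lt_def mulf_eq0 negb_or => /andP [/andP [_ +] _]; rewrite lt_def => ->; rewrite (w_ge0 hw).
  have mg0 : 0 < msg_marg mu w m by exact: lt_le_trans hp (p_le_marg mu_ge0 hw _ _ _).
  apply: ler_wpM2l; first exact: ltW.
  rewrite invfM mulrACA divff ?gt_eqF // mul1r log2M ?invr_gt0 // log2V //.
  by have := log2_le0 (w_le1 hw x y m); lra.
have step2 : \sum_x \sum_y \sum_(m <- ms) (mu x y * w x y m) * (- log2 (msg_marg mu w m))
   = \sum_(m <- ms) msg_marg mu w m * (- log2 (msg_marg mu w m)).
  rewrite /msg_marg.
  transitivity (\sum_(m <- ms) \sum_x \sum_y mu x y * w x y m * (- log2 (msg_marg mu w m))).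
    rewrite [in RHS]exchange_big /=; apply: eq_bigr => x _; by rewrite [in RHS]exchange_big.
  apply: eq_bigr => m _; rewrite mulr_suml; apply: eq_bigr => x _; by rewrite mulr_suml.
have step3 : \sum_(m <- ms) msg_marg mu w m * (- log2 (msg_marg mu w m)) <=
    \sum_(m <- ms) (msg_marg mu w m * (- log2 (Q m)) + (Q m - msg_marg mu w m) / ln 2).
  apply: ler_sum => m _.
  have := marg_ge0 mu_ge0 hw m; rewrite le_eqVlt => /orP [/eqP <-|hm].
    by rewrite !mul0r add0r subr0 divr_ge0 // ltW ?Q_gt0 ?ln2_gt0.
  exact: gibbs_term2 hm (Q_gt0 m).
have step4 : \sum_(m <- ms) (msg_marg mu w m * (- log2 (Q m)) + (Q m - msg_marg mu w m) / ln 2)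
   <= \sum_(m <- ms) msg_marg mu w m * (- log2 (Q m)).
  rewrite big_split /= -mulr_suml sumrB (sum_marg mu_sum1 hw) gerDl.
  by rewrite pmulr_lle0 ?invr_gt0 ?ln2_gt0 // subr_le0 sumQ.
have step5 : \sum_(m <- ms) msg_marg mu w m * (- log2 (Q m)) = K * exp_len mu ms w - log2 c.
  under eq_bigr do rewrite logQ mulrDr.
  rewrite big_split /= -mulr_suml (sum_marg mu_sum1 hw) mul1r exp_len_E mulr_sumr addrC.
  by congr (_ - _); apply: eq_bigr => m _; rewrite mulrA mulrC.
by rewrite -step5; apply: le_trans step1 _; rewrite step2; apply: le_trans step3 step4.
Qed.

End Len.


Lemma sum_pair (R : realType) (A B : finType) (G : A * B -> R) :
  \sum_(x : A * B) G x = \sum_(a : A) \sum_(b : B) G (a, b).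
Proof. by rewrite pair_bigA; apply: eq_bigr => -[]. Qed.

Lemma prod_pos (R : realType) (u v : R) : 0 <= u -> 0 <= v -> 0 < u * v -> 0 < u /\ 0 < v.
Proof.
move=> u0 v0; rewrite lt_def mulf_eq0 negb_or => /andP [/andP [hu hv] _].
by rewrite !lt_def hu hv u0 v0.
Qed.

Section Code.
Variable T : finType.
Definition ncode := size (index_enum T).
Definition code (z : T) : seq bool := [seq j == z | j <- index_enum T].
Definition dec (m : seq bool) : option T := [pick z | code z == take ncode m].

Lemma size_code z : size (code z) = ncode.
Proof. by rewrite /code size_map. Qed.

Lemma code_inj : injective code.
Proof.
move=> z z' /eq_in_map h; have := h z (mem_index_enum z).
by rewrite eqxx => /esym/eqP.
Qed.

Lemma dec_code z m : dec (code z ++ m) = Some z.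
Proof.
rewrite /dec take_size_cat ?size_code //; case: pickP => [z' /eqP /code_inj -> //|].
by move=> /(_ z); rewrite eqxx.
Qed.

Lemma drop_code z m : drop ncode (code z ++ m) = m.
Proof. by rewrite drop_size_cat ?size_code. Qed.

Lemma dec_some m z : dec m = Some z -> m = code z ++ drop ncode m.
Proof.
rewrite /dec; case: pickP => [z' /eqP h [<-]|//].
by rewrite h cat_take_drop.
Qed.

Lemma code_cat_inj z z' m m' : code z ++ m = code z' ++ m' -> z = z' /\ m = m'.
Proof.
move=> e; have := congr1 dec e; rewrite !dec_code => -[ez]; split => //.
by have := congr1 (drop ncode) e; rewrite !drop_code.
Qed.
End Code.

Section Split.
Variables (R : realType) (A1 B1 A2 B2 : finType) (O O1 : eqType).
Variables (g : A1 * A2 -> B1 * B2 -> O) (a : O) (g1 : A1 -> B1 -> O1) (a1 : O1)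
  (g2 : A2 -> B2 -> bool).
Hypothesis hg : forall x1 x2 y1 y2,
  (g (x1, x2) (y1, y2) == a) = (g1 x1 y1 == a1) && g2 x2 y2.
Variables (mu : A1 * A2 -> B1 * B2 -> R) (mu1 : A1 -> B1 -> R) (mu2 : A2 -> B2 -> R).
Hypothesis hmu : forall x1 x2 y1 y2, mu (x1, x2) (y1, y2) = mu1 x1 y1 * mu2 x2 y2.
Hypothesis mu1_ge0 : forall x y, 0 <= mu1 x y.
Hypothesis mu2_ge0 : forall x y, 0 <= mu2 x y.
Hypothesis mu1_sum1 : \sum_x \sum_y mu1 x y = 1.
Hypothesis mu2_sum1 : \sum_x \sum_y mu2 x y = 1.
Hypothesis supp1 : forall x y, 0 < mu1 x y -> g1 x y = a1.
Hypothesis supp2 : forall x y, 0 < mu2 x y -> g2 x y.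
Variables (ms : seq (seq bool)) (w : A1 * A2 -> B1 * B2 -> seq bool -> R)
  (accA : A1 * A2 -> seq bool -> bool) (accB : B1 * B2 -> seq bool -> bool).
Hypothesis hP : is_a_proof g a ms w accA accB.

Let hw : is_msg_dist ms w. Proof. by case: hP. Qed.
Let hW x y m : 0 <= w x y m. Proof. exact: (w_ge0 hw x y m). Qed.

Definition w1 x1 y1 m := \sum_x2 \sum_y2 mu2 x2 y2 * w (x1, x2) (y1, y2) m.
Definition accA1 x1 m := [exists x2, accA (x1, x2) m].
Definition accB1 y1 m := [exists y2, accB (y1, y2) m].

Lemma w1_ge0 x y m : 0 <= w1 x y m.
Proof. by apply: sumr_ge0 => ? _; apply: sumr_ge0 => ? _; rewrite mulr_ge0. Qed.

Lemma w1_ge x1 y1 x2 y2 m : mu2 x2 y2 * w (x1, x2) (y1, y2) m <= w1 x1 y1 m.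
Proof.
rewrite /w1 (le_trans _ (le_sum1 x2 _)) //.
  by apply: le_sum1 => j; rewrite mulr_ge0.
by move=> j; rewrite sumr_ge0 // => k _; rewrite mulr_ge0.
Qed.

Lemma P1_proof : is_a_proof g1 a1 ms w1 accA1 accB1.
Proof.
case: hP => [[u _ h0 h1] hc hs]; split.
- split => //; first exact: w1_ge0.
  + by move=> x y m hm; apply: big1 => x2 _; apply: big1 => y2 _; rewrite h0 // mulr0.
  + move=> x1 y1; rewrite /w1 exchange_big /= -mu2_sum1; apply: eq_bigr => x2 _.
    by rewrite exchange_big /=; apply: eq_bigr => y2 _; rewrite -mulr_sumr h1 mulr1.
- move=> x1 y1 e m hm.
  case: (boolP [exists x2, [exists y2, 0 < mu2 x2 y2 * w (x1, x2) (y1, y2) m]]).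
    move=> /existsP [x2 /existsP [y2 hp]].
    have [hm2 hw2] := prod_pos (mu2_ge0 _ _) (hW _ _ _) hp.
    have eg : g (x1, x2) (y1, y2) = a by apply/eqP; rewrite hg e eqxx supp2.
    have [hA hB] := hc _ _ eg m hw2.
    by split; apply/existsP; [exists x2|exists y2].
  rewrite negb_exists => /forallP hn; exfalso; move: hm; rewrite /w1 big1 ?ltxx //.
  move=> x2 _; apply: big1 => y2 _; have := hn x2; rewrite negb_exists => /forallP /(_ y2).
  by rewrite lt_def negb_and negbK mulr_ge0 // orbF => /eqP.
- move=> x1 y1 e m; case: (boolP (accA1 x1 m)) => [/existsP [x2 hA]|_]; last by left.
  right; apply/negbTE/existsP => -[y2 hB].
  have ng : g (x1, x2) (y1, y2) <> a.
    by move/eqP; rewrite hg => /andP [/eqP].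
  by case: (hs _ _ ng m); rewrite ?hA ?hB.
Qed.

Let n := ncode (A1 * B1)%type.
Let cd := @code (A1 * B1)%type.
Let dc := @dec (A1 * B1)%type.

Definition ms2 := [seq cd z ++ m | z <- index_enum (A1 * B1)%type, m <- ms].
Definition w2 x2 y2 m' :=
  if dc m' is Some z then mu1 z.1 z.2 * w (z.1, x2) (z.2, y2) (drop n m') else 0.
Definition accA2 x2 m' := if dc m' is Some z then accA (z.1, x2) (drop n m') else false.
Definition accB2 y2 m' := if dc m' is Some z then accB (z.2, y2) (drop n m') else false.

Lemma w2_code x2 y2 z m : w2 x2 y2 (cd z ++ m) = mu1 z.1 z.2 * w (z.1, x2) (z.2, y2) m.
Proof. by rewrite /w2 /dc /cd dec_code drop_code. Qed.

Lemma sum_ms2 (F : seq bool -> R) :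
  \sum_(m' <- ms2) F m' = \sum_(z : A1 * B1) \sum_(m <- ms) F (cd z ++ m).
Proof. by rewrite /ms2 big_allpairs_dep. Qed.

Lemma P2_proof : is_a_proof g2 true ms2 w2 accA2 accB2.
Proof.
case: hP => [[u _ h0 h1] hc hs]; split.
- split.
  + apply: allpairs_uniq => //; first exact: index_enum_uniq.
    by move=> [z m] [z' m'] _ _ /= /code_cat_inj [-> ->].
  + by move=> x y m; rewrite /w2; case: (dc m) => // z; rewrite mulr_ge0.
  + move=> x2 y2 m' hm'; rewrite /w2; case e: (dc m') => [z|] //.
    rewrite h0 ?mulr0 //; apply: contra hm' => hd.
    rewrite (dec_some e); apply: allpairs_f => //; exact: mem_index_enum.
  + move=> x2 y2; rewrite sum_ms2 -mu1_sum1 sum_pair; apply: eq_bigr => x1 _.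
    apply: eq_bigr => y1 _; under eq_bigr do rewrite w2_code.
    by rewrite -mulr_sumr h1 mulr1.
- move=> x2 y2 e m' hm; move: hm; rewrite /w2 /accA2 /accB2.
  case: (dc m') => [[x1 y1]|]; last by rewrite ltxx.
  move=> /= hp; have [hm1 hw1] := prod_pos (mu1_ge0 _ _) (hW _ _ _) hp.
  have eg : g (x1, x2) (y1, y2) = a by apply/eqP; rewrite hg e supp1 // eqxx.
  exact: hc _ _ eg _ hw1.
- move=> x2 y2 e m'; rewrite /accA2 /accB2; case: (dc m') => [[x1 y1]|]; last by left.
  have ng : g (x1, x2) (y1, y2) <> a.
    by move/eqP; rewrite hg => /andP [_ h]; apply: e.
  exact: hs.
Qed.

Lemma mu_ge0' x y : 0 <= mu x y.
Proof. by case: x y => x1 x2 [y1 y2]; rewrite hmu mulr_ge0. Qed.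

Let hw1 : is_msg_dist ms w1. Proof. by case: P1_proof. Qed.
Let hw2 : is_msg_dist ms2 w2. Proof. by case: P2_proof. Qed.

Lemma marg1 m : msg_marg mu1 w1 m = msg_marg mu w m.
Proof.
rewrite /msg_marg sum_pair; apply: eq_bigr => x1 _.
under [RHS]eq_bigr do rewrite sum_pair.
rewrite [RHS]exchange_big /=; apply: eq_bigr => y1 _.
rewrite /w1 mulr_sumr; apply: eq_bigr => x2 _; rewrite mulr_sumr; apply: eq_bigr => y2 _.
by rewrite hmu mulrA.
Qed.

Lemma marg2 z m : msg_marg mu2 w2 (cd z ++ m) = mu1 z.1 z.2 * w1 z.1 z.2 m.
Proof.
rewrite /msg_marg /w1 mulr_sumr; apply: eq_bigr => x2 _; rewrite mulr_sumr.
by apply: eq_bigr => y2 _; rewrite w2_code mulrCA.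
Qed.

Section Reorder.
Variable F : A1 -> A2 -> B1 -> B2 -> seq bool -> R.
Definition Csum := \sum_x1 \sum_x2 \sum_y1 \sum_y2 \sum_(m <- ms) F x1 x2 y1 y2 m.

Lemma reorder1 : \sum_x1 \sum_y1 \sum_(m <- ms) \sum_x2 \sum_y2 F x1 x2 y1 y2 m = Csum.
Proof.
rewrite /Csum; apply: eq_bigr => x1 _.
transitivity (\sum_y1 \sum_x2 \sum_y2 \sum_(m <- ms) F x1 x2 y1 y2 m); last first.
  by rewrite exchange_big.
apply: eq_bigr => y1 _; rewrite exchange_big; apply: eq_bigr => x2 _.
by rewrite exchange_big.
Qed.

Lemma reorder2 : \sum_x2 \sum_y2 \sum_x1 \sum_y1 \sum_(m <- ms) F x1 x2 y1 y2 m = Csum.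
Proof.
rewrite /Csum.
transitivity (\sum_x2 \sum_x1 \sum_y2 \sum_y1 \sum_(m <- ms) F x1 x2 y1 y2 m).
  by apply: eq_bigr => x2 _; exact: exchange_big.
rewrite exchange_big /=; apply: eq_bigr => x1 _; apply: eq_bigr => x2 _; exact: exchange_big.
Qed.
End Reorder.

Definition pE x1 x2 y1 y2 m := mu1 x1 y1 * mu2 x2 y2 * w (x1, x2) (y1, y2) m.
Definition TE x1 x2 y1 y2 m := pE x1 x2 y1 y2 m *
  log2 (pE x1 x2 y1 y2 m / (mu1 x1 y1 * mu2 x2 y2 * msg_marg mu w m)).
Definition T1 x1 x2 y1 y2 m := pE x1 x2 y1 y2 m *
  log2 (mu1 x1 y1 * w1 x1 y1 m / (mu1 x1 y1 * msg_marg mu w m)).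
Definition T2 x1 x2 y1 y2 m := mu2 x2 y2 * (mu1 x1 y1 * w (x1, x2) (y1, y2) m) *
  log2 (mu2 x2 y2 * (mu1 x1 y1 * w (x1, x2) (y1, y2) m) /
        (mu2 x2 y2 * (mu1 x1 y1 * w1 x1 y1 m))).

Lemma infoE : ext_info mu ms w = Csum TE.
Proof.
rewrite (ext_info_E mu_ge0' hw) sum_pair /Csum; apply: eq_bigr => x1 _.
apply: eq_bigr => x2 _; rewrite sum_pair; apply: eq_bigr => y1 _.
by apply: eq_bigr => y2 _; apply: eq_bigr => m _; rewrite /TE /pE hmu.
Qed.

Lemma info1 : ext_info mu1 ms w1 = Csum T1.
Proof.
rewrite (ext_info_E mu1_ge0 hw1) -reorder1; apply: eq_bigr => x1 _.
apply: eq_bigr => y1 _; apply: eq_bigr => m _.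
rewrite marg1; set L := log2 _.
rewrite /w1 mulr_sumr mulr_suml; apply: eq_bigr => x2 _.
rewrite mulr_sumr mulr_suml; apply: eq_bigr => y2 _.
by rewrite /T1 /pE /L /w1 mulrA.
Qed.

Lemma info2 : ext_info mu2 ms2 w2 = Csum T2.
Proof.
rewrite (ext_info_E mu2_ge0 hw2) -reorder2; apply: eq_bigr => x2 _.
apply: eq_bigr => y2 _; rewrite sum_ms2 sum_pair; apply: eq_bigr => x1 _.
by apply: eq_bigr => y1 _; apply: eq_bigr => m _; rewrite w2_code marg2 /T2.
Qed.

Lemma term_split x1 x2 y1 y2 m : TE x1 x2 y1 y2 m = T1 x1 x2 y1 y2 m + T2 x1 x2 y1 y2 m.
Proof.
have e2 : mu2 x2 y2 * (mu1 x1 y1 * w (x1, x2) (y1, y2) m) = pE x1 x2 y1 y2 m.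
  by rewrite /pE mulrCA mulrA.
rewrite /TE /T1 /T2 e2.
have : 0 <= pE x1 x2 y1 y2 m by rewrite /pE !mulr_ge0.
rewrite le_eqVlt => /orP [/eqP <-|hp]; first by rewrite !mul0r addr0.
have [h12 hW0] := prod_pos (mulr_ge0 (mu1_ge0 _ _) (mu2_ge0 _ _)) (hW _ _ _) hp.
have [hm1 hm2] := prod_pos (mu1_ge0 _ _) (mu2_ge0 _ _) h12.
have hw10 : 0 < w1 x1 y1 m := lt_le_trans (mulr_gt0 hm2 hW0) (w1_ge _ _ _ _ _).
have hmg : 0 < msg_marg mu w m.
  apply: lt_le_trans (p_le_marg mu_ge0' hw (x1, x2) (y1, y2) m).
  by rewrite hmu; move: hp; rewrite /pE.
rewrite -mulrDr -log2M; last 2 first.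
- by rewrite divr_gt0 ?mulr_gt0.
- by rewrite divr_gt0 ?mulr_gt0 //; rewrite -e2.
congr (_ * log2 _); rewrite -e2; field.
by rewrite !gt_eqF.
Qed.

Lemma info_split : ext_info mu ms w = ext_info mu1 ms w1 + ext_info mu2 ms2 w2.
Proof.
rewrite infoE info1 info2 /Csum -!big_split /=; apply: eq_bigr => x1 _.
rewrite -!big_split /=; apply: eq_bigr => x2 _.
rewrite -!big_split /=; apply: eq_bigr => y1 _.
rewrite -!big_split /=; apply: eq_bigr => y2 _.
rewrite -!big_split /=; apply: eq_bigr => m _.
exact: term_split.
Qed.

End Split.


Section Transport.
Variables (R : realType) (A B A' B' : finType) (O : eqType) (g : A -> B -> O) (a : O).
Variables (eA : A' -> A) (eB : B' -> B).
Hypotheses (bA : bijective eA) (bB : bijective eB).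
Variables (mu : A -> B -> R) (ms : seq (seq bool)) (w : A -> B -> seq bool -> R)
  (accA : A -> seq bool -> bool) (accB : B -> seq bool -> bool).

Lemma sumA (F : A -> R) : \sum_(x : A) F x = \sum_(x : A') F (eA x).
Proof. by rewrite (reindex eA) //; exact: onW_bij. Qed.
Lemma sumB (F : B -> R) : \sum_(x : B) F x = \sum_(x : B') F (eB x).
Proof. by rewrite (reindex eB) //; exact: onW_bij. Qed.

Lemma transport_proof : is_a_proof g a ms w accA accB ->
  is_a_proof (fun x y => g (eA x) (eB y)) a ms (fun x y => w (eA x) (eB y))
    (fun x => accA (eA x)) (fun y => accB (eB y)).
Proof.
case=> [[u h0 h1 h2] hc hs]; split => //.
- by split => // x y m hm; apply: h1.
- by move=> x y e m hm; apply: hc.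
- by move=> x y e m; apply: hs.
Qed.

Lemma transport_info : ext_info (fun x y => mu (eA x) (eB y)) ms (fun x y => w (eA x) (eB y))
  = ext_info mu ms w.
Proof.
have hm m : msg_marg (fun x y => mu (eA x) (eB y)) (fun x y => w (eA x) (eB y)) m =
            msg_marg mu w m.
  by rewrite /msg_marg sumA; apply: eq_bigr => x _; rewrite sumB.
rewrite /ext_info [RHS]sumA; apply: eq_bigr => x _; rewrite [RHS]sumB.
by apply: eq_bigr => y _; apply: eq_bigr => m _; rewrite hm.
Qed.
End Transport.

Section Join.
Variable T : Type.
Definition join q (xs : {ffun 'I_q -> T}) (x : T) : {ffun 'I_q.+1 -> T} :=
  [ffun i => if unlift ord0 i is Some j then xs j else x].
Definition splitf q (xs : {ffun 'I_q.+1 -> T}) : {ffun 'I_q -> T} * T :=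
  ([ffun j => xs (lift ord0 j)], xs ord0).

Lemma join0 q xs x : @join q xs x ord0 = x.
Proof. by rewrite ffunE unlift_none. Qed.
Lemma joinS q xs x j : @join q xs x (lift ord0 j) = xs j.
Proof. by rewrite ffunE liftK. Qed.

Lemma join_bij q : bijective (fun p : {ffun 'I_q -> T} * T => join p.1 p.2).
Proof.
exists (@splitf q).
  by move=> [xs x]; rewrite /splitf /= join0; congr pair; apply/ffunP => j; rewrite ffunE joinS.
move=> xs; apply/ffunP => i; rewrite /splitf /= ffunE.
by case: unliftP => [j ->|->] //; rewrite ffunE.
Qed.
End Join.

Section Pow.
Variables (R : realType) (X Y : finType) (f : X -> Y -> bool) (mu : X -> Y -> R).
Hypothesis mu_ge0 : forall x y, 0 <= mu x y.
Hypothesis mu_sum1 : \sum_(x : X) \sum_(y : Y) mu x y = 1.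
Hypothesis mu_supp : forall x y, 0 < mu x y -> f x y = true.

Lemma mupow_join q xs x ys y :
  mupow mu q.+1 (join xs x) (join ys y) = mupow mu q xs ys * mu x y.
Proof.
rewrite /mupow big_ord_recl !join0 mulrC; congr (_ * _).
by apply: eq_bigr => i _; rewrite !joinS.
Qed.

Lemma fpow_ones q xs ys : (fpow f q xs ys == ones q) = [forall i, f (xs i) (ys i)].
Proof.
apply/eqP/forallP => [e i | h].
  by have := congr1 (fun g : {ffun _ -> bool} => g i) e; rewrite /= !ffunE.
by apply/ffunP => i; rewrite !ffunE h.
Qed.

Lemma fpow_join q xs x ys y :
  (fpow f q.+1 (join xs x) (join ys y) == ones q.+1) = (fpow f q xs ys == ones q) && f x y.
Proof.
rewrite !fpow_ones; apply/forallP/andP => [h|[/forallP h hxy] i].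
  split; last by have := h ord0; rewrite !join0.
  by apply/forallP => j; have := h (lift ord0 j); rewrite !joinS.
by case: (unliftP ord0 i) => [j ->|->]; rewrite ?joinS ?join0.
Qed.

Lemma mupow_ge0 q xs ys : 0 <= mupow mu q xs ys.
Proof. by apply: prodr_ge0 => i _. Qed.

Lemma mupow_supp q xs ys : 0 < mupow mu q xs ys -> fpow f q xs ys = ones q.
Proof.
move=> hp; apply/eqP; rewrite fpow_ones; apply/forallP => i; apply: mu_supp.
rewrite lt_def mu_ge0 andbT; apply/eqP => e; move: hp.
by rewrite /mupow (bigD1 i) //= e mul0r ltxx.
Qed.

Lemma sum_join (Z : finType) q (F : {ffun 'I_q.+1 -> Z} -> R) :
  \sum_xs F xs = \sum_(xs : {ffun 'I_q -> Z}) \sum_(x : Z) F (join xs x).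
Proof.
rewrite (reindex (fun p : {ffun 'I_q -> Z} * Z => join p.1 p.2)) /=.
  by rewrite sum_pair.
exact/onW_bij/join_bij.
Qed.

Lemma mupow_sum1 q : \sum_xs \sum_ys mupow mu q xs ys = 1.
Proof.
elim: q => [|q IH].
  rewrite /mupow; under eq_bigr do under eq_bigr do rewrite big_ord0.
  rewrite sumr_const /= sumr_const /= card_ffun card_ord expn0.
  by rewrite card_ffun card_ord expn0.
rewrite sum_join.
transitivity (\sum_(xs : {ffun 'I_q -> X}) \sum_(ys : {ffun 'I_q -> Y})
               \sum_x \sum_y mupow mu q xs ys * mu x y).
  apply: eq_bigr => xs _; under eq_bigr do rewrite sum_join.
  rewrite exchange_big /=; apply: eq_bigr => ys _; apply: eq_bigr => x _; apply: eq_bigr => y _.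
  by rewrite mupow_join.
rewrite -IH; apply: eq_bigr => xs _; apply: eq_bigr => ys _.
by rewrite -[RHS]mulr1 -mu_sum1 mulr_sumr; apply: eq_bigr => x _; rewrite mulr_sumr.
Qed.

End Pow.


Section Main.
Variables (R : realType) (X Y : finType) (f : X -> Y -> bool) (mu : X -> Y -> R).
Hypothesis mu_ge0 : forall x y, 0 <= mu x y.
Hypothesis mu_sum1 : \sum_(x : X) \sum_(y : Y) mu x y = 1.
Hypothesis mu_supp : forall x y, 0 < mu x y -> f x y = true.

Local Open Scope ereal_scope.

Lemma IC_ge0 : 0 <= IC_ext_proof f true mu.
Proof.
apply/ereal_infP => _ [ms [w [aA [aB [hp ->]]]]]; rewrite lee_fin.
by apply: (ext_info_ge0 mu_ge0 mu_sum1); case: hp.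
Qed.

Lemma info_lb q : forall ms w accA accB,
  is_a_proof (fpow f q) (ones q) ms w accA accB ->
  (q%:R)%:E * IC_ext_proof f true mu <= (ext_info (mupow mu q) ms w)%:E.
Proof.
elim: q => [|q IH] ms w aA aB hp.
  rewrite mul0e lee_fin; apply: (ext_info_ge0 (@mupow_ge0 _ _ _ mu mu_ge0 0)
     (@mupow_sum1 _ _ _ mu mu_sum1 0)); by case: hp.
pose eA := (fun p : {ffun 'I_q -> X} * X => join p.1 p.2).
pose eB := (fun p : {ffun 'I_q -> Y} * Y => join p.1 p.2).
have hp' := @transport_proof R _ _ _ _ _ _ _ eA eB ms w aA aB hp.
rewrite -(@transport_info R _ _ _ _ eA eB (join_bij X q) (join_bij Y q) (mupow mu q.+1) ms w).
have hg : forall x1 x2 y1 y2,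
   ((fun x y => fpow f q.+1 (eA x) (eB y)) (x1, x2) (y1, y2) == ones q.+1) =
   (fpow f q x1 y1 == ones q) && f x2 y2.
  by move=> x1 x2 y1 y2; exact: fpow_join.
have hmu : forall x1 x2 y1 y2,
   (fun x y => mupow mu q.+1 (eA x) (eB y)) (x1, x2) (y1, y2) = (mupow mu q x1 y1 * mu x2 y2)%R.
  by move=> x1 x2 y1 y2; exact: mupow_join.
have m1g := @mupow_ge0 _ _ _ mu mu_ge0 q.
have m1s := @mupow_sum1 _ _ _ mu mu_sum1 q.
have m1p := @mupow_supp _ _ _ f mu mu_ge0 mu_supp q.
rewrite (info_split hg hmu m1g mu_ge0 m1s mu_sum1 m1p mu_supp hp').
rewrite EFinD -addn1 natrD EFinD ge0_muleDl ?lee_fin // mul1e.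
apply: leeD.
  exact: (IH _ _ _ _ (P1_proof hg mu_ge0 mu_sum1 mu_supp hp')).
apply: ereal_inf_lbound; do 4 eexists; split; last reflexivity.
exact: (P2_proof hg m1g m1s m1p hp').
Qed.

End Main.


Section Final.
Variables (R : realType) (X Y : finType) (f : X -> Y -> bool) (mu : X -> Y -> R).
Hypothesis mu_ge0 : forall x y, 0 <= mu x y.
Hypothesis mu_sum1 : \sum_(x : X) \sum_(y : Y) mu x y = 1.
Hypothesis mu_supp : forall x y, 0 < mu x y -> f x y = true.

Lemma key (v t : R) q ms w accA accB : 1 < t -> (v%:E <= IC_ext_proof f true mu)%E ->
  is_a_proof (fpow f q) (ones q) ms w accA accB ->
  q%:R * v <= log2 (2 * t) * exp_len (mupow mu q) ms w - log2 (1 - t^-1).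
Proof.
move=> t1 hv hp.
have h1 := info_lb mu_ge0 mu_sum1 mu_supp hp.
have h0 : ((q%:R * v)%:E <= (ext_info (mupow mu q) ms w)%:E)%E.
  apply: le_trans h1; rewrite EFinM; apply: lee_wpmul2l => //; by rewrite lee_fin.
rewrite lee_fin in h0; apply: le_trans h0 _.
apply: len_bound => //.
- exact: mupow_ge0.
- exact: mupow_sum1.
- by case: hp.
Qed.

Lemma exp_len_ge0 (Z W : finType) (nu : Z -> W -> R) ms w :
  (forall x y, 0 <= nu x y) -> is_msg_dist ms w -> 0 <= exp_len nu ms w.
Proof.
move=> h hw; apply: sumr_ge0 => x _; apply: sumr_ge0 => y _; apply: sumr_ge0 => m _.
by rewrite !mulr_ge0 // (w_ge0 hw).
Qed.

Definition uq q := (CC_proof (fpow f q) (ones q) (mupow mu q) * ((q%:R : R)^-1)%:E)%E.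

Lemma uq_ge0 q : (0 <= uq q)%E.
Proof.
apply: mule_ge0; last by rewrite lee_fin invr_ge0.
apply/ereal_infP => _ [ms [w [aA [aB [hp ->]]]]]; rewrite lee_fin.
apply: exp_len_ge0; first exact: mupow_ge0. by case: hp.
Qed.

Lemma ev (r v : R) : 0 < r -> r < v -> (v%:E <= IC_ext_proof f true mu)%E ->
  exists N, forall q, (N <= q)%N -> (r%:E <= uq q)%E.
Proof.
move=> r0 rv hv.
have ln20 := @ln2_gt0 R.
pose s := ((v / r - 1) * ln 2) / 2.
have vr1 : (1 < v / r)%R by rewrite ltr_pdivlMr // mul1r.
have s0 : (0 < s)%R by rewrite /s divr_gt0 // mulr_gt0 // subr_gt0.
pose t := (1 + s)%R.
have t1 : (1 < t)%R by rewrite /t ltrDl.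
pose K := log2 (2 * t).
have hK : (K <= 1 + (v / r - 1) / 2)%R.
  rewrite /K log2M // ?(lt_trans ltr01 t1) //.
  have -> : log2 (2 : R) = 1 by rewrite /log2 divff // gt_eqF.
  rewrite lerD2l /log2 ler_pdivrMr //.
  apply: le_trans (ln_le_sub1 (lt_trans ltr01 t1)) _.
  by rewrite le_eqVlt; apply/orP; left; apply/eqP; rewrite /t /s; ring.
have K0 : (0 < K)%R.
  rewrite /K /log2 divr_gt0 // ln_gt0 //.
  by rewrite (lt_le_trans _ (ler_wpM2l _ (ltW t1))) ?mulr1 ?ltr1n.
have rK : (r * K < v)%R.
  have : (r * K <= r * (1 + (v / r - 1) / 2))%R by rewrite ler_pM2l.
  move=> h; apply: le_lt_trans h _.
  have -> : (r * (1 + (v / r - 1) / 2) = (r + v) / 2)%R by field; rewrite gt_eqF.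
  lra.
pose D := (v - r * K)%R.
have D0 : (0 < D)%R by rewrite /D subr_gt0.
pose L0 := (- log2 (1 - t^-1))%R.
exists (Num.trunc (`|L0| / D)).+1 => q hq.
have hq0 : (0 < q)%N by apply: leq_trans hq.
have hqD : (L0 < q%:R * D)%R.
  rewrite -ltr_pdivrMr //.
  apply: (@le_lt_trans _ _ (`|L0| / D)); first by rewrite ler_pM2r ?invr_gt0 // ler_norm.
  by apply: lt_le_trans (truncnS_gt _) _; rewrite ler_nat.
have hCC : ((r * q%:R)%:E <= CC_proof (fpow f q) (ones q) (mupow mu q))%E.
  apply/ereal_infP => _ [ms [w [aA [aB [hp ->]]]]]; rewrite lee_fin.
  have hk := key t1 hv hp.
  set E := exp_len _ _ _ in hk *.
  have : (r * q%:R * K <= E * K)%R.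
    have e : (r * q%:R * K = q%:R * v - q%:R * D)%R by rewrite /D; ring.
    rewrite e; move: hk; rewrite -/K -/L0 => hk; lra.
  by rewrite ler_pM2r.
rewrite /uq; move: hCC.
have qi0 : (0 < (q%:R : R)^-1)%R by rewrite invr_gt0 ltr0n.
case: (CC_proof _ _ _) => [y||] //.
- rewrite -EFinM !lee_fin => h.
  by rewrite ler_pdivlMr ?ltr0n // (le_trans _ h) // mulrC.
- by move=> _; rewrite gt0_mulye ?lee_fin ?leey // lte_fin.
Qed.

Local Open Scope ereal_scope.

Lemma final : IC_ext_proof f true mu <= limn_einf uq.
Proof.
rewrite limn_einf_lim.
have L0 : 0 <= limn (einfs uq).
  apply: lime_ge; first exact: is_cvg_einfs.
  by apply: nearW => n; apply/ereal_infP => _ [k _ <-]; exact: uq_ge0.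
case: (leP (IC_ext_proof f true mu) (limn (einfs uq))) => // hlt.
move: L0 hlt; case E : (limn (einfs uq)) => [l| |] //; last first.
  by move=> _; rewrite ltNge leey.
rewrite lee_fin => l0 hl.
have [v [lv hv]] : exists v : R, (l < v)%R /\ v%:E <= IC_ext_proof f true mu.
  move: hl; case: (IC_ext_proof f true mu) => [v0||] //.
    by rewrite lte_fin => h; exists v0.
  by move=> _; exists (l + 1)%R; split; [rewrite ltrDl | rewrite leey].
pose r := ((l + v) / 2)%R.
have lr : (l < r)%R by rewrite /r; lra.
have rv : (r < v)%R by rewrite /r; lra.
have r0 : (0 < r)%R by lra.
have [N hN] := ev r0 rv hv.
have : r%:E <= limn (einfs uq).
  apply: lime_ge; first exact: is_cvg_einfs.
  exists N => // n /= hn; apply/ereal_infP => _ [k /= hk <-]; apply: hN.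
  exact: leq_trans hn hk.
by rewrite E lee_fin; lra.
Qed.

End Final.

End Aux.
Import Aux.

Theorem theorem1p1 (R : realType) (X Y : finType) (f : X -> Y -> bool)
    (mu : X -> Y -> R)
    (mu_ge0 : forall x y, 0 <= mu x y)
    (mu_sum1 : \sum_(x : X) \sum_(y : Y) mu x y = 1)
    (mu_supp : forall x y, 0 < mu x y -> f x y = true) :
  (IC_ext_proof f true mu <=
   limn_einf (fun q : nat =>
     CC_proof (fpow f q) (ones q) (mupow mu q) * ((q%:R : R)^-1)%:E))%E.
Proof.
exact: (Aux.final mu_ge0 mu_sum1 mu_supp).
Qed.
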